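(* Let $\sigma_1,\sigma_2\subset\mathbb R^n$ be two $n$-dimensional simplices with $\sigma_1\cap\sigma_2=\tau$ a common facet. Let $\mathcal D:=\sigma_1^0\cup(\sigma_2\setminus\partial\tau)$ and $\overline{\mathcal D}:=\sigma_1\cup\sigma_2$. Then there exists a semialgebraic homeomorphism $\psi:\sigma_2\to\overline{\mathcal D}$ such that $\psi(\sigma_2\setminus\tau)=\mathcal D$ and $\psi$ restricted to $\partial\sigma_2\setminus\tau^0$ is the identity.
   Context: For a simplex $\rho$, $\rho^0$ denotes its relative interior and $\partial\rho=\rho\setminus\rho^0$ its relative boundary. A facet of an $n$-simplex is a face of dimension $n-1$. *)

(* Defs.v *)
From HB Require Import structures.
From mathcomp Require Import all_boot all_order all_algebra.
Set Implicit Arguments. Unset Strict Implicit. Unset Printing Implicit Defensive.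
Import Order.TTheory GRing.Theory Num.Theory.
Local Open Scope ring_scope.

Section Defs.
Variable R : rcfType.

Inductive pexpr : Type :=
  | PConst of R
  | PVar of nat
  | PAdd of pexpr & pexpr
  | PMul of pexpr & pexpr
  | POpp of pexpr.

(* coordinate i of x (0 outside the range) *)
Definition coord_env (n : nat) (x : 'rV[R]_n) (i : nat) : R :=
  match ltnP i n with
  | LtnNotGeq Hi => x 0 (Ordinal Hi)
  | _ => 0
  end.

Fixpoint peval (env : nat -> R) (p : pexpr) : R :=
  match p with
  | PConst c => c
  | PVar i => env i
  | PAdd p q => peval env p + peval env q
  | PMul p q => peval env p * peval env q
  | POpp p => - peval env p
  end.

(* an atom (p, true) means p(x) > 0, (p, false) means p(x) = 0 *)
Definition atom_holds (n : nat) (x : 'rV[R]_n) (a : pexpr * bool) : bool :=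
  if a.2 then 0 < peval (coord_env x) a.1 else peval (coord_env x) a.1 == 0.

(* semialgebraic subset of R^n: finite union of basic sets
   {p_1 = 0, ..., q_1 > 0, ...} *)
Definition semialgebraic (n : nat) (S : 'rV[R]_n -> Prop) : Prop :=
  exists L : seq (seq (pexpr * bool)),
    forall x, S x <-> has (fun c => all (atom_holds x) c) L.

(* f restricted to A is semialgebraic: its graph in R^n x R^m is semialgebraic *)
Definition semialgebraic_map (n m : nat) (A : 'rV[R]_n -> Prop)
    (f : 'rV[R]_n -> 'rV[R]_m) : Prop :=
  semialgebraic (fun z : 'rV[R]_(n + m) =>
    A (lsubmx z) /\ rsubmx z = f (lsubmx z)).

Definition edist (n : nat) (x y : 'rV[R]_n) : R :=
  Num.sqrt (\sum_(i < n) (x 0 i - y 0 i) ^+ 2).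

Definition continuous_on (n m : nat) (A : 'rV[R]_n -> Prop)
    (f : 'rV[R]_n -> 'rV[R]_m) : Prop :=
  forall x, A x -> forall e : R, 0 < e -> exists2 d : R, 0 < d &
    forall y, A y -> edist x y < d -> edist (f x) (f y) < e.

Definition homeomorphism_on (n m : nat) (A : 'rV[R]_n -> Prop)
    (B : 'rV[R]_m -> Prop) (f : 'rV[R]_n -> 'rV[R]_m) : Prop :=
  (forall x, A x -> B (f x)) /\ continuous_on A f /\
  exists g : 'rV[R]_m -> 'rV[R]_n,
    [/\ forall y, B y -> A (g y), continuous_on B g,
        forall x, A x -> g (f x) = x & forall y, B y -> f (g y) = y].

(* the k points (rows of V) are affinely independent *)
Definition aff_indep (k n : nat) (V : 'M[R]_(k, n)) : bool :=
  row_free (row_mx V (const_mx 1 : 'cV[R]_k)).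

Definition simplex (k n : nat) (V : 'M[R]_(k, n)) (x : 'rV[R]_n) : Prop :=
  exists w : 'rV[R]_k, [/\ forall i, 0 <= w 0 i, \sum_(i < k) w 0 i = 1 &
                          x = w *m V].

Definition simplex_relint (k n : nat) (V : 'M[R]_(k, n)) (x : 'rV[R]_n) : Prop :=
  exists w : 'rV[R]_k, [/\ forall i, 0 < w 0 i, \sum_(i < k) w 0 i = 1 &
                          x = w *m V].

Definition simplex_bd (k n : nat) (V : 'M[R]_(k, n)) (x : 'rV[R]_n) : Prop :=
  simplex V x /\ ~ simplex_relint V x.

Definition facet_vertices (k n : nat) (V : 'M[R]_(k.+1, n)) (i : 'I_k.+1)
  : 'M[R]_(k, n) := row' i V.

End Defs.

(* Main.v *)
Require Import Defs.
From HB Require Import structures.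
From mathcomp Require Import all_boot all_order all_algebra.
From mathcomp Require Import ring lra.
Set Implicit Arguments. Unset Strict Implicit. Unset Printing Implicit Defensive.
Import Order.TTheory GRing.Theory Num.Theory.
Local Open Scope ring_scope.


Section MExpr.
Variable R : rcfType.

Inductive mexpr : Type :=
  | MC of R
  | MV of nat
  | MAdd of mexpr & mexpr
  | MMul of mexpr & mexpr
  | MOpp of mexpr
  | MMin of mexpr & mexpr.

Fixpoint meval (env : nat -> R) (t : mexpr) : R :=
  match t with
  | MC c => c
  | MV i => env i
  | MAdd p q => meval env p + meval env q
  | MMul p q => meval env p * meval env q
  | MOpp p => - meval env p
  | MMin p q => Num.min (meval env p) (meval env q)
  end.

Fixpoint msubst (s : nat -> mexpr) (t : mexpr) : mexpr :=
  match t with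
  | MC c => MC c
  | MV i => s i
  | MAdd p q => MAdd (msubst s p) (msubst s q)
  | MMul p q => MMul (msubst s p) (msubst s q)
  | MOpp p => MOpp (msubst s p)
  | MMin p q => MMin (msubst s p) (msubst s q)
  end.

Lemma meval_subst env s t :
  meval env (msubst s t) = meval (fun i => meval env (s i)) t.
Proof. by elim: t => //= [p -> q ->|p -> q ->|p ->|p -> q ->]. Qed.

Lemma meval_ext env env' t : (forall i, env i = env' i) ->
  meval env t = meval env' t.
Proof. by move=> h; elim: t => //= [p -> q ->|p -> q ->|p ->|p -> q ->]. Qed.

Definition msum (l : seq mexpr) := foldr MAdd (MC 0) l.

Lemma meval_msum (I : finType) env (f : I -> mexpr) :
  meval env (msum [seq f i | i <- enum I]) = \sum_i meval env (f i).
Proof.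
rewrite -big_enum /=; elim: (enum I) => [|a l IH] /=; first by rewrite big_nil.
by rewrite big_cons IH.
Qed.

Lemma meval_foldr_min env t (I : Type) (f : I -> mexpr) l :
  meval env (foldr MMin t [seq f i | i <- l]) =
  foldr Num.min (meval env t) [seq meval env (f i) | i <- l].
Proof. by elim: l => //= a l ->. Qed.

Definition scont (n : nat) (f : 'rV[R]_n -> R) :=
  forall x e, 0 < e -> exists2 d, 0 < d &
    forall y, edist x y < d -> `|f x - f y| < e.

Lemma sum_sq_le_sqsum (m : nat) (F : 'I_m -> R) :
  (forall i, 0 <= F i) -> \sum_i F i ^+ 2 <= (\sum_i F i) ^+ 2.
Proof.
elim: m F => [|m IH] F hF; first by rewrite !big_ord0 expr0n.
rewrite !big_ord_recr /=.
have h1 := IH (fun i => F (widen_ord (leqnSn m) i)) (fun i => hF _).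
have h2 : 0 <= \sum_(i < m) F (widen_ord (leqnSn m) i) by apply: sumr_ge0.
have h3 := hF ord_max.
set S := \sum_(i < m) _ in h1 h2 *. set T := \sum_(i < m) _ in h1 h2 *.
nra.
Qed.

Lemma edist_le_sum (n : nat) (x y : 'rV[R]_n) :
  edist x y <= \sum_i `|x 0 i - y 0 i|.
Proof.
rewrite /edist -(@ger0_norm _ (\sum_i `|x 0 i - y 0 i|)); last by apply: sumr_ge0 => i _.
rewrite -sqrtr_sqr ler_sqrt ?sqr_ge0 //.
rewrite (eq_bigr (fun i => `|x 0 i - y 0 i| ^+ 2)) => [|i _]; last first.
  by rewrite real_normK ?num_real.
by apply: sum_sq_le_sqsum.
Qed.

Lemma coord_le_edist (n : nat) (x y : 'rV[R]_n) i :
  `|x 0 i - y 0 i| <= edist x y.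
Proof.
rewrite /edist -sqrtr_sqr ler_sqrt ?sumr_ge0 // => [|j _]; last exact: sqr_ge0.
by rewrite (bigD1 i) //= lerDl sumr_ge0 // => j _; apply: sqr_ge0.
Qed.

Lemma coord_env_le (n : nat) (x y : 'rV[R]_n) i :
  `|coord_env x i - coord_env y i| <= edist x y.
Proof.
rewrite /coord_env; case: ltnP => h.
  exact: coord_le_edist.
by rewrite subrr normr0 /edist sqrtr_ge0.
Qed.

Lemma min_close (a b c d e : R) : `|a - c| < e -> `|b - d| < e ->
  `|Num.min a b - Num.min c d| < e.
Proof.
rewrite !ltr_norml => /andP[h1 h2] /andP[h3 h4].
rewrite /Num.min; case: ifP => h5; case: ifP => h6; apply/andP; split; lra.
Qed.

Lemma mul_close (a b c d e : R) (k : R) : 0 < e ->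
  `|a - c| < Num.min 1 (e / (2 * (1 + `|a| + `|b|))) ->
  `|b - d| < Num.min 1 (e / (2 * (1 + `|a| + `|b|))) ->
  `|a * b - c * d| < e.
Proof.
move=> he.
set K := 1 + `|a| + `|b|.
have hK : 0 < K by rewrite /K; have := normr_ge0 a; have := normr_ge0 b; lra.
set e1 := Num.min 1 _.
have he1 : e1 <= 1 by rewrite /e1 ge_min lexx.
have he1' : e1 * (2 * K) <= e.
  rewrite /e1; have : Num.min 1 (e / (2 * K)) <= e / (2 * K) by rewrite ge_min lexx orbT.
  by rewrite ler_pdivlMr ?mulr_gt0 //.
move=> h1 h2.
have -> : a * b - c * d = (a - c) * b + a * (b - d) - (a - c) * (b - d) by ring.
apply: (le_lt_trans (ler_normB _ _)).
apply: (le_lt_trans (lerD (ler_normD _ _) (lexx _))).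
rewrite !normrM.
have n1 := normr_ge0 (a - c). have n2 := normr_ge0 (b - d).
have na := normr_ge0 a. have nb := normr_ge0 b.
have : `|a - c| * `|b| <= e1 * `|b| by rewrite ler_wpM2r // ltW.
have : `|a| * `|b - d| <= `|a| * e1 by rewrite ler_wpM2l // ltW.
have : `|a - c| * `|b - d| <= e1 * e1.
  by apply: ler_pM => //; apply: ltW.
have : e1 * e1 <= e1 by rewrite -[X in _ <= X]mulr1 ler_wpM2l // (le_trans n1) // ltW.
have : 0 < e1 by apply: le_lt_trans h1.
rewrite /K in he1' hK *.
nra.
Qed.

Lemma scont_meval (n : nat) (t : mexpr) :
  scont (fun x : 'rV[R]_n => meval (coord_env x) t).
Proof.
elim: t => [c|i|p IHp q IHq|p IHp q IHq|p IHp|p IHp q IHq] x e he /=.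
- by exists 1 => // y _; rewrite subrr normr0.
- by exists e => // y hy; apply: le_lt_trans (coord_env_le _ _ _) hy.
- have [d1 hd1 H1] := IHp x (e / 2) (divr_gt0 he (ltr0Sn _ 1)).
  have [d2 hd2 H2] := IHq x (e / 2) (divr_gt0 he (ltr0Sn _ 1)).
  exists (Num.min d1 d2); first by rewrite lt_min hd1.
  move=> y; rewrite lt_min => /andP[y1 y2].
  have := H1 _ y1; have := H2 _ y2.
  set a := meval _ p; set b := meval _ p; set c := meval _ q; set d := meval _ q.
  move=> h2 h1; have -> : a + c - (b + d) = (a - b) + (c - d) by ring.
  apply: le_lt_trans (ler_normD _ _) _; lra.
- set a := meval _ p; set b := meval _ q.
  set e1 := Num.min 1 (e / (2 * (1 + `|a| + `|b|))).
  have he1 : 0 < e1.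
    rewrite /e1 lt_min ltr01 /= divr_gt0 // mulr_gt0 //.
    have := normr_ge0 a; have := normr_ge0 b; lra.
  have [d1 hd1 H1] := IHp x e1 he1.
  have [d2 hd2 H2] := IHq x e1 he1.
  exists (Num.min d1 d2); first by rewrite lt_min hd1.
  move=> y; rewrite lt_min => /andP[y1 y2].
  exact: mul_close 0 he (H1 _ y1) (H2 _ y2).
- have [d hd H] := IHp x e he; exists d => // y /H.
  by rewrite -opprD normrN.
- have [d1 hd1 H1] := IHp x e he.
  have [d2 hd2 H2] := IHq x e he.
  exists (Num.min d1 d2); first by rewrite lt_min hd1.
  move=> y; rewrite lt_min => /andP[y1 y2].
  exact: min_close (H1 _ y1) (H2 _ y2).
Qed.


Lemma fin_delta (n m : nat) (f : 'I_m -> 'rV[R]_n -> R) x e :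
  (forall i, scont (f i)) -> 0 < e ->
  exists2 d, 0 < d & forall y, edist x y < d -> forall i, `|f i x - f i y| < e.
Proof.
move=> hf he.
suff : forall l : seq 'I_m, exists2 d, 0 < d &
  forall y, edist x y < d -> forall i, i \in l -> `|f i x - f i y| < e.
  by case/(_ (enum 'I_m)) => d hd H; exists d => // y hy i; apply: H; rewrite ?mem_enum.
elim=> [|a l [d hd H]]; first by exists 1.
have [d1 hd1 H1] := hf a x e he.
exists (Num.min d d1); first by rewrite lt_min hd.
move=> y; rewrite lt_min => /andP[y1 y2] i; rewrite inE => /orP[/eqP->|hi].
  exact: H1.
exact: H.
Qed.

Lemma cont_rows (n m : nat) (F : 'I_m -> mexpr) (A : 'rV[R]_n -> Prop) :
  continuous_on A (fun x : 'rV[R]_n => \row_i meval (coord_env x) (F i)).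
Proof.
move=> x _ e he.
set e' := e / (m%:R + 1).
have hm : (0:R) <= m%:R by apply: ler0n.
have he' : 0 < e' by rewrite /e' divr_gt0 //; lra.
have he'e : e' * m%:R < e.
  have h : e' * (m%:R + 1) = e by rewrite /e' mulfVK //; apply/eqP => h0; lra.
  have -> : e' * m%:R = e - e' by rewrite -h; ring.
  lra.
have [d hd H] := fin_delta x (fun i => scont_meval (F i)) he'.
exists d => // y _ hy.
apply: le_lt_trans (edist_le_sum _ _) _.
apply: le_lt_trans he'e.
apply: (@le_trans _ _ (\sum_(i < m) e')).
  by apply: ler_sum => i _; rewrite !mxE; apply: ltW; exact: H.
by rewrite sumr_const card_ord mulr_natr.
Qed.

(* semialgebraic sets via cell decompositions *)
Definition cell_cover (N : nat) (L : seq (seq (pexpr R * bool) * pexpr R)) :=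
  forall z : 'rV[R]_N, has (fun c => all (atom_holds z) c.1) L.
Definition cell_ok (N : nat) (t : mexpr) (L : seq (seq (pexpr R * bool) * pexpr R)) :=
  forall z : 'rV[R]_N, all (fun c => all (atom_holds z) c.1 ==>
     (meval (coord_env z) t == peval (coord_env z) c.2)) L.

Lemma all_flatten_map (T U : Type) (P : pred U) (g : T -> seq U) l :
  all P (flatten (map g l)) = all (fun c => all P (g c)) l.
Proof. by elim: l => //= a l IH; rewrite all_cat IH. Qed.
Lemma has_flatten_map (T U : Type) (P : pred U) (g : T -> seq U) l :
  has P (flatten (map g l)) = has (fun c => has P (g c)) l.
Proof. by elim: l => //= a l IH; rewrite has_cat IH. Qed.

Lemma all_has_pair (T : Type) (P Q : pred T) l :
  all (fun c => P c ==> Q c) l -> has P l -> has (fun c => P c && Q c) l.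
Proof.
elim: l => //= a l IH /andP[h1 h2] /orP[h|h].
  by rewrite h (implyP h1 h).
by rewrite IH ?orbT.
Qed.

Lemma has_pairs (T U V : Type) (P : pred V) (Q1 : pred T) (Q2 : pred U)
  (g : T -> U -> seq V) L1 L2 : has Q1 L1 -> has Q2 L2 ->
  (forall a b, Q1 a -> Q2 b -> has P (g a b)) ->
  has P (flatten (map (fun a => flatten (map (g a) L2)) L1)).
Proof.
move=> h1 h2 H; rewrite has_flatten_map; move: h1.
elim: L1 => //= a L1 IH /orP[h|h]; last by rewrite IH ?orbT.
apply/orP; left; rewrite has_flatten_map; move: h2.
elim: L2 {IH} => //= b L2 IH2 /orP[h'|h']; last by rewrite IH2 ?orbT.
by rewrite H.
Qed.

Lemma all_pairs (T U V : Type) (P : pred V) (Q1 : pred T) (Q2 : pred U)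
  (g : T -> U -> seq V) L1 L2 : all Q1 L1 -> all Q2 L2 ->
  (forall a b, Q1 a -> Q2 b -> all P (g a b)) ->
  all P (flatten (map (fun a => flatten (map (g a) L2)) L1)).
Proof.
move=> h1 h2 H; rewrite all_flatten_map; move: h1.
elim: L1 => //= a L1 IH /andP[h hl]; rewrite IH // andbT all_flatten_map.
move: h2; elim: L2 {IH} => //= b L2 IH2 /andP[h' hl']; by rewrite H // IH2.
Qed.

Lemma cells (N : nat) (t : mexpr) : exists L, @cell_cover N L /\ @cell_ok N t L.
Proof.
elim: t => [c|i|p [L1 [C1 O1]] q [L2 [C2 O2]]|p [L1 [C1 O1]] q [L2 [C2 O2]]
           |p [L1 [C1 O1]]|p [L1 [C1 O1]] q [L2 [C2 O2]]].
- by exists [:: ([::], PConst c)]; split => z //=; rewrite eqxx.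
- by exists [:: ([::], @PVar R i)]; split => z //=; rewrite eqxx.
- exists (flatten (map (fun c1 => flatten (map (fun c2 =>
     [:: (c1.1 ++ c2.1, PAdd c1.2 c2.2)]) L2)) L1)).
  split => z.
    apply: has_pairs (C1 z) (C2 z) _ => a b h1 h2 /=.
    by rewrite all_cat h1 h2.
  apply: all_pairs (O1 z) (O2 z) _ => a b h1 h2 /=; rewrite andbT.
  apply/implyP; rewrite all_cat => /andP[a1 a2].
  by rewrite (eqP (implyP h1 a1)) (eqP (implyP h2 a2)).
- exists (flatten (map (fun c1 => flatten (map (fun c2 =>
     [:: (c1.1 ++ c2.1, PMul c1.2 c2.2)]) L2)) L1)).
  split => z.
    apply: has_pairs (C1 z) (C2 z) _ => a b h1 h2 /=.
    by rewrite all_cat h1 h2.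
  apply: all_pairs (O1 z) (O2 z) _ => a b h1 h2 /=; rewrite andbT.
  apply/implyP; rewrite all_cat => /andP[a1 a2].
  by rewrite (eqP (implyP h1 a1)) (eqP (implyP h2 a2)).
- exists (map (fun c => (c.1, POpp c.2)) L1); split => z.
    by rewrite has_map; apply: C1.
  rewrite all_map; have := O1 z; elim: L1 {C1 O1} => //= c1 L1 IH /andP[h1 hl].
  rewrite IH // andbT; apply/implyP => a1; by rewrite (eqP (implyP h1 a1)).
- exists (flatten (map (fun c1 => flatten (map (fun c2 =>
     [:: (c1.1 ++ c2.1 ++ [:: (PAdd c1.2 (POpp c2.2), true)], c2.2);
         (c1.1 ++ c2.1 ++ [:: (PAdd c1.2 (POpp c2.2), false)], c1.2);
         (c1.1 ++ c2.1 ++ [:: (PAdd c2.2 (POpp c1.2), true)], c1.2)]) L2)) L1)).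
  split => z.
    apply: has_pairs (C1 z) (C2 z) _ => a b h1 h2 /=.
    rewrite !all_cat h1 h2 /= /atom_holds /=.
    set u := peval _ a.2; set v := peval _ b.2.
    case: (ltrgtP (u + - v) 0) => hh; rewrite ?orbT //.
    by rewrite subr_gt0 -subr_lt0 hh !orbT.
  apply: all_pairs (O1 z) (O2 z) _ => a b h1 h2 /=.
  rewrite !all_cat /atom_holds /= !andbT.
  do ! (apply/andP; split); apply/implyP => /and3P[a1 a2 a3];
  rewrite (eqP (implyP h1 a1)) (eqP (implyP h2 a2)); move: a3.
  + by rewrite subr_gt0 => hh; rewrite /Num.min ltNge (ltW hh).
  + by rewrite subr_eq0 => /eqP ->; rewrite minxx.
  + by rewrite subr_gt0 => hh; rewrite /Num.min hh.
Qed.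

Lemma sa_zero (N : nat) (t : mexpr) :
  semialgebraic (fun z : 'rV[R]_N => meval (coord_env z) t = 0).
Proof.
have [L [C O]] := cells N t.
exists (map (fun c => c.1 ++ [:: (c.2, false)]) L) => z.
have ah : forall c : seq (pexpr R * bool) * pexpr R,
  all (atom_holds z) (c.1 ++ [:: (c.2, false)]) =
  all (atom_holds z) c.1 && (peval (coord_env z) c.2 == 0).
  by move=> c; rewrite all_cat /= andbT.
rewrite has_map; move: (C z) (O z); elim: L {C O} => // c L IH.
rewrite /= => hc /andP[h hl]; rewrite {1}/preim /= ah.
have e1 := implyP h.
split.
  move=> h0; case/orP: hc => [hc|hc].
    by rewrite hc -(eqP (e1 hc)) h0 eqxx.
  by apply/orP; right; apply/IH.
case/orP => [/andP[a /eqP e]|hh]; first by rewrite (eqP (e1 a)).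
move: hh hl; elim: L {IH hc} => // c' L' IH'.
rewrite /= ah => /orP[/andP[a /eqP e]|hh] /andP[h' hl'].
  by rewrite (eqP (implyP h' a)).
exact: IH'.
Qed.

End MExpr.


Section Simp.
Variable R : rcfType.

Definition uniqc (k n : nat) (V : 'M[R]_(k, n)) :=
  forall w w' : 'rV[R]_k, \sum_i w 0 i = \sum_i w' 0 i ->
    w *m V = w' *m V -> w = w'.

Lemma mul_const1 (k : nat) (w : 'rV[R]_k) j :
  (w *m (const_mx 1 : 'cV[R]_k)) 0 j = \sum_i w 0 i.
Proof. by rewrite !mxE; apply: eq_bigr => i _; rewrite mxE mulr1. Qed.

Lemma aff_uniqc (k n : nat) (V : 'M[R]_(k, n)) : aff_indep V -> uniqc V.
Proof.
move=> hV w w' hs hm; apply/eqP; rewrite -subr_eq0.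
rewrite -(mulmx_free_eq0 _ hV) mul_mx_row mulmxBl hm subrr.
apply/eqP/rowP => j; rewrite !mxE.
case: splitP => l _; first by rewrite !mxE.
rewrite mul_const1.
have -> : \sum_i (w - w') 0 i = \sum_i w 0 i - \sum_i w' 0 i.
  by rewrite -sumrB; apply: eq_bigr => i _; rewrite !mxE.
by rewrite hs subrr.
Qed.

Section Facet.
Variables (k n : nat) (V : 'M[R]_(k.+1, n)) (i : 'I_k.+1).

Definition lw (u : 'rV[R]_k) : 'rV[R]_k.+1 :=
  \row_j (if unlift i j is Some l then u 0 l else 0).
Definition rw (w : 'rV[R]_k.+1) : 'rV[R]_k := \row_l w 0 (lift i l).

Lemma lw_i u : lw u 0 i = 0.
Proof. by rewrite mxE unlift_none. Qed.
Lemma lw_lift u l : lw u 0 (lift i l) = u 0 l.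
Proof. by rewrite mxE liftK. Qed.
Lemma lw_sum u : \sum_j lw u 0 j = \sum_l u 0 l.
Proof.
rewrite (bigD1_ord i) //= lw_i add0r; apply: eq_bigr => l _; exact: lw_lift.
Qed.
Lemma sum_lift (F : 'I_k.+1 -> 'rV[R]_n) :
  \sum_j F j = F i + \sum_l F (lift i l).
Proof. by rewrite (bigD1_ord i). Qed.
Lemma lw_mul u : lw u *m V = u *m row' i V.
Proof.
rewrite !mulmx_sum_row sum_lift lw_i scale0r add0r.
apply: eq_bigr => l _; rewrite lw_lift; congr (_ *: _).
by apply/rowP => j; rewrite !mxE.
Qed.
Lemma lwK (w : 'rV[R]_k.+1) : w 0 i = 0 -> lw (rw w) = w.
Proof.
move=> h; apply/rowP => j; rewrite mxE; case: (eqVneq i j) => [<-|hij].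
  by rewrite unlift_none h.
by case: (unlift_some hij) => l -> ->; rewrite mxE.
Qed.
Lemma rw_lift (w : 'rV[R]_k.+1) l : rw w 0 l = w 0 (lift i l).
Proof. by rewrite mxE. Qed.

Lemma facetP x : simplex (row' i V) x <->
  exists w : 'rV[R]_k.+1, [/\ w 0 i = 0, forall j, 0 <= w 0 j,
     \sum_j w 0 j = 1 & x = w *m V].
Proof.
split.
  case=> u [h1 h2 h3]; exists (lw u); split; rewrite ?lw_i ?lw_sum ?lw_mul //.
  by move=> j; rewrite mxE; case: unlift.
case=> w [h1 h2 h3 h4]; exists (rw w); split.
- by move=> l; rewrite rw_lift.
- by rewrite -lw_sum lwK.
- by rewrite -lw_mul lwK.
Qed.

Lemma facet_relintP x : simplex_relint (row' i V) x <->
  exists w : 'rV[R]_k.+1, [/\ w 0 i = 0, forall j, j != i -> 0 < w 0 j,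
     \sum_j w 0 j = 1 & x = w *m V].
Proof.
split.
  case=> u [h1 h2 h3]; exists (lw u); split; rewrite ?lw_i ?lw_sum ?lw_mul //.
  move=> j hj; case: (unlift_some (i:=j) (h:=i) _) => [|l -> _]; first by rewrite eq_sym.
  by rewrite lw_lift.
case=> w [h1 h2 h3 h4]; exists (rw w); split.
- by move=> l; rewrite rw_lift h2 // eq_sym neq_lift.
- by rewrite -lw_sum lwK.
- by rewrite -lw_mul lwK.
Qed.

Lemma facet_uniqc : uniqc V -> uniqc (row' i V).
Proof.
move=> hu u u' hs hm.
have := hu (lw u) (lw u'); rewrite !lw_sum !lw_mul => /(_ hs hm) e.
by apply/rowP => l; rewrite -!lw_lift e.
Qed.

Definition zw (w : 'rV[R]_k.+1) : 'rV[R]_k.+1 :=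
  \row_j (if j == i then 0 else w 0 j).

Lemma zw_mul (w : 'rV[R]_k.+1) : w *m V = zw w *m V + w 0 i *: row i V.
Proof.
rewrite !mulmx_sum_row !sum_lift !mxE eqxx scale0r add0r addrC; congr (_ + _).
by apply: eq_bigr => l _; rewrite mxE lift_eqF.
Qed.
Lemma zw_sum (w : 'rV[R]_k.+1) : \sum_j w 0 j = \sum_j zw w 0 j + w 0 i.
Proof.
rewrite (bigD1_ord i) // (bigD1_ord i (F := fun j => zw w 0 j)) //= mxE eqxx add0r addrC.
by congr (_ + _); apply: eq_bigr => l _; rewrite mxE lift_eqF.
Qed.

Lemma zw_i (w : 'rV[R]_k.+1) : zw w 0 i = 0.
Proof. by rewrite mxE eqxx. Qed.
Lemma zw_ge0 (w : 'rV[R]_k.+1) : (forall j, 0 <= w 0 j) -> forall j, 0 <= zw w 0 j.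
Proof. by move=> h j; rewrite mxE; case: eqP. Qed.
Lemma zw_gt0 (w : 'rV[R]_k.+1) : (forall j, 0 < w 0 j) -> forall j, j != i -> 0 < zw w 0 j.
Proof. by move=> h j hj; rewrite mxE (negbTE hj). Qed.
End Facet.

(* intrinsic characterization of the relative interior *)
Lemma exists_small (T : eqType) (f : T -> R) (l : seq T) :
  (forall t, 0 < f t) -> exists2 e, 0 < e & forall t, t \in l -> e <= f t.
Proof.
move=> hf; elim: l => [|a l [e he H]]; first by exists 1.
exists (Num.min e (f a)); first by rewrite lt_min he hf.
move=> t; rewrite inE => /orP[/eqP->|ht]; first by rewrite ge_min lexx orbT.
by rewrite ge_min H.
Qed.

Lemma relint_simplex (k n : nat) (V : 'M[R]_(k, n)) x :
  simplex_relint V x -> simplex V x.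
Proof. by case=> w [h1 h2 h3]; exists w; split => // j; apply: ltW. Qed.

Definition delta (k : nat) (j : 'I_k) : 'rV[R]_k := \row_l (l == j)%:R.
Lemma delta_mul (k n : nat) (V : 'M[R]_(k, n)) j : delta j *m V = row j V.
Proof.
rewrite mulmx_sum_row (bigD1 j) //= mxE eqxx scale1r big1 ?addr0 // => l /negbTE hl.
by rewrite mxE hl scale0r.
Qed.
Lemma delta_sum (k : nat) (j : 'I_k) : \sum_l delta j 0 l = 1.
Proof.
rewrite (bigD1 j) //= mxE eqxx big1 ?addr0 // => l /negbTE hl.
by rewrite mxE hl.
Qed.

Lemma vertex_simplex (k n : nat) (V : 'M[R]_(k, n)) j : simplex V (row j V).
Proof.
exists (delta j); split; rewrite ?delta_sum ?delta_mul //.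
by move=> l; rewrite mxE ler0n.
Qed.

Lemma RI (k n : nat) (V : 'M[R]_(k, n)) x : uniqc V ->
  simplex_relint V x <-> (simplex V x /\ forall p, simplex V p ->
     exists2 e, 0 < e & simplex V (x + e *: (x - p))).
Proof.
move=> hu; split.
  case=> w [h1 h2 h3]; split; first by apply: relint_simplex; exists w.
  move=> p [u [u1 u2 u3]].
  have [e he H] := exists_small (enum 'I_k) (fun j => h1 j).
  exists e => //; exists (w + e *: (w - u)); split.
  - move=> j; rewrite !mxE.
    have hj := H j (mem_enum _ _).
    have uj : u 0 j <= 1.
      by rewrite -u2 (bigD1 j) //= lerDl sumr_ge0 // => l _.
    have := h1 j; have := u1 j; nra.
  - have -> : \sum_j (w + e *: (w - u)) 0 j = \sum_j (w 0 j + e * (w 0 j - u 0 j)).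
      by apply: eq_bigr => j _; rewrite !mxE.
    by rewrite big_split /= -mulr_sumr sumrB h2 u2 subrr mulr0 addr0.
  - by rewrite mulmxDl -scalemxAl mulmxBl h3 u3.
case=> [[w [h1 h2 h3]] H]; exists w; split => // j.
have [e he [w' [w1 w2 w3]]] := H _ (vertex_simplex V j).
have he1 : 1 + e != 0 by apply/eqP => h0; lra.
have := hu w ((1 + e)^-1 *: (w' + e *: delta j)).
have -> : \sum_i ((1 + e)^-1 *: (w' + e *: delta j)) 0 i =
          (1 + e)^-1 * (\sum_i w' 0 i + e * \sum_i delta j 0 i).
  rewrite mulr_sumr -big_split mulr_sumr /=; apply: eq_bigr => i _.
  by rewrite !mxE mulrDr.
rewrite w2 delta_sum h2 mulr1 mulVf // => /(_ erefl).
rewrite -scalemxAl mulmxDl -scalemxAl delta_mul -w3 -h3.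
have -> : (1 + e)^-1 *: (x + e *: (x - row j V) + e *: row j V) = x.
  rewrite scalerBr -addrA addrNK -{1}(scale1r x) -scalerDl scalerA mulVf //.
  by rewrite scale1r.
move=> /(_ erefl) ->; rewrite !mxE.
apply: mulr_gt0; first by rewrite invr_gt0; lra.
rewrite eqxx mulr1; have := w1 j; lra.
Qed.

End Simp.


Section Main.
Variable R : rcfType.
Variable n : nat.
Hypothesis n_gt0 : (0 < n)%N.
Variables V1 V2 : 'M[R]_(n.+1, n).
Hypothesis hV1 : aff_indep V1.
Hypothesis hV2 : aff_indep V2.
Variables i1 i2 : 'I_n.+1.
Hypothesis htau : forall x, simplex (facet_vertices V1 i1) x <->
                             simplex (facet_vertices V2 i2) x.
Hypothesis hcap : forall x, (simplex V1 x /\ simplex V2 x) <->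
                      simplex (facet_vertices V2 i2) x.

Local Notation a := i2.
Definition M2 := row_mx V2 (const_mx 1 : 'cV[R]_n.+1).
Definition Pm := locked (pinvmx M2).
Definition lam (x : 'rV[R]_n) : 'rV[R]_n.+1 := row_mx x (1 : 'rV[R]_1) *m Pm.

Lemma lamP x : lam x *m V2 = x /\ \sum_k lam x 0 k = 1.
Proof.
have hf : row_full M2 by rewrite /row_full /M2 (eqP hV2) addn1.
have e : lam x *m M2 = row_mx x 1.
  by rewrite /lam /Pm -lock; exact: mulmxKpV (submx_full _ hf).
move: e; rewrite /M2 mul_mx_row => /eq_row_mx[-> h]; split => //.
by rewrite -(mul_const1 (lam x) 0) h mxE.
Qed.
Lemma lamV x : lam x *m V2 = x. Proof. by case: (lamP x). Qed.
Lemma lam_sum x : \sum_k lam x 0 k = 1. Proof. by case: (lamP x). Qed.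

Lemma uV2 : uniqc V2. Proof. exact: aff_uniqc. Qed.
Lemma uV1 : uniqc V1. Proof. exact: aff_uniqc. Qed.

Lemma lam_comb (w : 'rV[R]_n.+1) : \sum_k w 0 k = 1 -> lam (w *m V2) = w.
Proof. by move=> hs; apply: uV2; rewrite ?lamV // lam_sum hs. Qed.

Definition beta := locked (lam (row i1 V1)).
Lemma beta_sum : \sum_k beta 0 k = 1. Proof. by rewrite /beta -lock; exact: lam_sum. Qed.
Lemma betaV : beta *m V2 = row i1 V1. Proof. by rewrite /beta -lock; exact: lamV. Qed.

Definition j0 : 'I_n.+1 := lift a (Ordinal n_gt0).
Lemma j0_neq : j0 != a. Proof. by rewrite /j0 eq_sym neq_lift. Qed.
Definition Jlist := [seq j <- enum 'I_n.+1 | j != a].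
Lemma mem_J j : (j \in Jlist) = (j != a).
Proof. by rewrite mem_filter mem_enum andbT. Qed.

Definition minJ (f : 'I_n.+1 -> R) := foldr Num.min (f j0) [seq f j | j <- Jlist].

Lemma fmin_le (x0 : R) l : foldr Num.min x0 l <= x0 /\ forall y, y \in l -> foldr Num.min x0 l <= y.
Proof.
elim: l => [|b l [h1 h2]] /=; first by split.
split; first by rewrite ge_min h1 orbT.
by move=> y; rewrite inE => /orP[/eqP->|hy]; rewrite ge_min ?lexx // h2 ?orbT.
Qed.
Lemma fmin_in (x0 : R) l : foldr Num.min x0 l = x0 \/ foldr Num.min x0 l \in l.
Proof.
elim: l => [|b l IH] /=; first by left.
rewrite /Num.min; case: ifP => _; first by right; rewrite inE eqxx.
by case: IH => [->|h]; [left | right; rewrite inE h orbT].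
Qed.

Lemma minJ_le f j : j != a -> minJ f <= f j.
Proof.
move=> hj; have [_ h] := fmin_le (f j0) [seq f j | j <- Jlist].
by apply: h; apply: map_f; rewrite mem_J.
Qed.
Lemma minJ_ex f : exists2 j, j != a & minJ f = f j.
Proof.
rewrite /minJ; case: (fmin_in (f j0) [seq f j | j <- Jlist]) => [h|h].
  by exists j0; rewrite ?j0_neq.
by case/mapP: h => j; rewrite mem_J => hj ->; exists j.
Qed.
Lemma minJ_eq f m : (forall j, j != a -> m <= f j) -> (exists2 j, j != a & f j = m) ->
  minJ f = m.
Proof.
move=> h1 [j hj e]; apply/le_anti/andP; split; first by rewrite -e minJ_le.
by have [j' hj' ->] := minJ_ex f; apply: h1.
Qed.
Lemma minJ_ext f g : (forall j, j != a -> f j = g j) -> minJ f = minJ g.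
Proof.
move=> h; rewrite /minJ h ?j0_neq //; congr foldr; apply/eq_in_map => j.
by rewrite mem_J => /h.
Qed.
Lemma minJ_shift f c : minJ (fun j => f j + c) = minJ f + c.
Proof.
apply: minJ_eq => [j hj|]; first by rewrite lerD2r minJ_le.
by have [j hj ->] := minJ_ex f; exists j.
Qed.
Lemma minJ_ge0 f : (forall j, j != a -> 0 <= f j) -> 0 <= minJ f.
Proof. by move=> h; have [j hj ->] := minJ_ex f; apply: h. Qed.
Lemma minJ_gt0 f : (forall j, j != a -> 0 < f j) -> 0 < minJ f.
Proof. by move=> h; have [j hj ->] := minJ_ex f; apply: h. Qed.

Lemma sumr_ge0_eq0 (w : 'rV[R]_n.+1) : (forall k, 0 <= w 0 k) -> \sum_k w 0 k = 0 -> w = 0.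
Proof.
move=> h1 h2; apply/rowP => k; rewrite mxE.
by apply: (psumr_eq0P (P := xpredT) (fun k _ => h1 k) h2).
Qed.

Lemma sum_scale (c : R) (w : 'rV[R]_n.+1) : \sum_k (c *: w) 0 k = c * \sum_k w 0 k.
Proof. by rewrite mulr_sumr; apply: eq_bigr => k _; rewrite mxE. Qed.

Lemma transfer (V W : 'M[R]_(n.+1, n)) i j :
  (forall x, simplex (row' i V) x -> simplex (row' j W) x) ->
  forall w : 'rV[R]_n.+1, w 0 i = 0 -> (forall k, 0 <= w 0 k) ->
  exists nu : 'rV[R]_n.+1, [/\ nu 0 j = 0, forall k, 0 <= nu 0 k,
     \sum_k nu 0 k = \sum_k w 0 k & w *m V = nu *m W].
Proof.
move=> H w w1 w2.
have c0 : 0 <= \sum_k w 0 k by apply: sumr_ge0.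
case: (eqVneq (\sum_k w 0 k) 0) => hc.
  exists 0; split.
  - by rewrite mxE.
  - by move=> k; rewrite mxE.
  - by rewrite hc big1 // => k _; rewrite mxE.
  - by rewrite (sumr_ge0_eq0 w2 hc) !mul0mx.
have cp : 0 < \sum_k w 0 k by rewrite lt_def hc.
set c := \sum_k w 0 k in hc c0 cp *.
have : simplex (row' i V) (((c^-1) *: w) *m V).
  apply/facetP; exists (c^-1 *: w); split => //.
  - by rewrite mxE w1 mulr0.
  - by move=> k; rewrite mxE mulr_ge0 // invr_ge0.
  - by rewrite sum_scale mulVf.
move/H/facetP => [th [t1 t2 t3 t4]].
exists (c *: th); split.
- by rewrite mxE t1 mulr0.
- by move=> k; rewrite mxE mulr_ge0.
- by rewrite sum_scale t3 mulr1.
- by rewrite -scalemxAl -t4 -scalemxAl scalerA mulfV // scale1r.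
Qed.

Lemma transfer_rel (V W : 'M[R]_(n.+1, n)) i j :
  (forall x, simplex_relint (row' i V) x -> simplex_relint (row' j W) x) ->
  forall w : 'rV[R]_n.+1, w 0 i = 0 -> (forall k, k != i -> 0 < w 0 k) ->
  exists nu : 'rV[R]_n.+1, [/\ nu 0 j = 0, forall k, k != j -> 0 < nu 0 k,
     \sum_k nu 0 k = \sum_k w 0 k & w *m V = nu *m W].
Proof.
move=> H w w1 w2.
have cp : 0 < \sum_k w 0 k.
  rewrite (bigD1_ord i) //= w1 add0r (bigD1 (Ordinal n_gt0)) //=.
  apply: ltr_pwDl; first by apply: w2; rewrite eq_sym neq_lift.
  by apply: sumr_ge0 => l _; rewrite ltW // w2 // eq_sym neq_lift.
set c := \sum_k w 0 k in cp *.
have hc : c != 0 by rewrite gt_eqF.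
have : simplex_relint (row' i V) (((c^-1) *: w) *m V).
  apply/facet_relintP; exists (c^-1 *: w); split => //.
  - by rewrite mxE w1 mulr0.
  - by move=> k hk; rewrite mxE mulr_gt0 ?invr_gt0 ?w2.
  - by rewrite sum_scale mulVf.
move/H/facet_relintP => [th [t1 t2 t3 t4]].
exists (c *: th); split.
- by rewrite mxE t1 mulr0.
- by move=> k hk; rewrite mxE mulr_gt0 ?t2.
- by rewrite sum_scale t3 mulr1.
- by rewrite -scalemxAl -t4 -scalemxAl scalerA mulfV // scale1r.
Qed.

Lemma htau_rel x : simplex_relint (row' i1 V1) x <-> simplex_relint (row' a V2) x.
Proof.
rewrite (RI _ (facet_uniqc (i:=i1) uV1)) (RI _ (facet_uniqc (i:=a) uV2)).
have ht := htau; rewrite /facet_vertices in ht.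
split => -[h1 h2]; split; first by apply/ht.
- by move=> p /ht/h2 [e he /ht hh]; exists e.
- by apply/ht.
- by move=> p /ht/h2 [e he /ht hh]; exists e.
Qed.

(* characterizations in barycentric coordinates of sigma_2 *)
Lemma sig2P x : simplex V2 x <-> forall k, 0 <= lam x 0 k.
Proof.
split; last by move=> h; exists (lam x); rewrite lam_sum lamV.
by case=> w [h1 h2 ->]; rewrite lam_comb.
Qed.
Lemma rel2P x : simplex_relint V2 x <-> forall k, 0 < lam x 0 k.
Proof.
split; last by move=> h; exists (lam x); rewrite lam_sum lamV.
by case=> w [h1 h2 ->]; rewrite lam_comb.
Qed.
Lemma tauP x : simplex (facet_vertices V2 a) x <-> lam x 0 a = 0 /\ forall k, 0 <= lam x 0 k.
Proof.
rewrite /facet_vertices facetP; split.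
  by case=> w [h1 h2 h3 ->]; rewrite lam_comb.
by case=> h1 h2; exists (lam x); rewrite lam_sum lamV.
Qed.
Lemma tau0P x : simplex_relint (facet_vertices V2 a) x <->
  lam x 0 a = 0 /\ forall k, k != a -> 0 < lam x 0 k.
Proof.
rewrite /facet_vertices facet_relintP; split.
  by case=> w [h1 h2 h3 ->]; rewrite lam_comb.
by case=> h1 h2; exists (lam x); rewrite lam_sum lamV.
Qed.

Definition In1 (e : 'rV[R]_n.+1) := exists s (nu : 'rV[R]_n.+1),
  [/\ 0 <= s, nu 0 a = 0, forall k, 0 <= nu 0 k, \sum_k nu 0 k = 1 - s &
      e = nu + s *: beta].
Definition Int1 (e : 'rV[R]_n.+1) := exists s (nu : 'rV[R]_n.+1),
  [/\ 0 < s, nu 0 a = 0, forall k, k != a -> 0 < nu 0 k, \sum_k nu 0 k = 1 - s &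
      e = nu + s *: beta].

Lemma sum_comb (nu : 'rV[R]_n.+1) s : \sum_k (nu + s *: beta) 0 k = \sum_k nu 0 k + s.
Proof.
have -> : \sum_k (nu + s *: beta) 0 k = \sum_k (nu 0 k + s * beta 0 k).
  by apply: eq_bigr => k _; rewrite !mxE.
by rewrite big_split /= -mulr_sumr beta_sum mulr1.
Qed.

Lemma sig1P y : simplex V1 y <-> In1 (lam y).
Proof.
have ht : forall x, simplex (row' i1 V1) x -> simplex (row' a V2) x by move=> x /htau.
have ht' : forall x, simplex (row' a V2) x -> simplex (row' i1 V1) x by move=> x /htau.
split.
  case=> w [w1 w2 w3].
  have [nu [n1 n2 n3 n4]] := transfer ht (zw_i i1 w) (zw_ge0 i1 w1).
  exists (w 0 i1), nu; split => //.
  - by have := zw_sum i1 w; rewrite w2 n3; lra.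
  apply: esym; apply: uV2; rewrite ?lamV ?lam_sum ?sum_comb.
    by have := zw_sum i1 w; rewrite w2 n3; lra.
  by rewrite mulmxDl -scalemxAl betaV -n4 w3 [in RHS](zw_mul V1 i1 w).
case=> s [nu [s1 n1 n2 n3 e]].
have [w [w1 w2 w3 w4]] := transfer ht' n1 n2.
exists (w + s *: (@delta R _ i1)); split.
- move=> k; rewrite !mxE addr_ge0 // mulr_ge0 // ler0n.
- have -> : \sum_k (w + s *: (@delta R _ i1)) 0 k = \sum_k (w 0 k + s * (@delta R _ i1) 0 k).
    by apply: eq_bigr => k _; rewrite !mxE.
  by rewrite big_split /= -mulr_sumr delta_sum w3 n3 mulr1 subrK.
- by rewrite -(lamV y) e mulmxDl -scalemxAl betaV w4 mulmxDl -scalemxAl delta_mul.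
Qed.

Lemma rel1P y : simplex_relint V1 y <-> Int1 (lam y).
Proof.
have ht : forall x, simplex_relint (row' i1 V1) x -> simplex_relint (row' a V2) x.
  by move=> x /htau_rel.
have ht' : forall x, simplex_relint (row' a V2) x -> simplex_relint (row' i1 V1) x.
  by move=> x /htau_rel.
split.
  case=> w [w1 w2 w3].
  have [nu [n1 n2 n3 n4]] := transfer_rel ht (zw_i i1 w) (zw_gt0 w1).
  exists (w 0 i1), nu; split => //.
    by have := zw_sum i1 w; rewrite w2 n3; lra.
  apply: esym; apply: uV2; rewrite ?lamV ?lam_sum ?sum_comb.
    by have := zw_sum i1 w; rewrite w2 n3; lra.
  by rewrite mulmxDl -scalemxAl betaV -n4 w3 [in RHS](zw_mul V1 i1 w).
case=> s [nu [s1 n1 n2 n3 e]].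
have [w [w1 w2 w3 w4]] := transfer_rel ht' n1 n2.
exists (w + s *: (@delta R _ i1)); split.
- move=> k; rewrite !mxE /delta ?mxE; case: (eqVneq k i1) => [->|hk].
    by rewrite w1 add0r mulr1.
  by rewrite mulr0 addr0 w2.
- have -> : \sum_k (w + s *: (@delta R _ i1)) 0 k = \sum_k (w 0 k + s * (@delta R _ i1) 0 k).
    by apply: eq_bigr => k _; rewrite !mxE.
  by rewrite big_split /= -mulr_sumr delta_sum w3 n3 mulr1 subrK.
- by rewrite -(lamV y) e mulmxDl -scalemxAl betaV w4 mulmxDl -scalemxAl delta_mul.
Qed.

Definition nR : R := n%:R.
Ltac fld := field; rewrite ?pnatr_eq0 -?lt0n ?n_gt0 //.
Lemma nR_gt0 : 0 < nR. Proof. by rewrite ltr0n. Qed.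
Lemma nR_neq0 : nR != 0. Proof. by rewrite gt_eqF // nR_gt0. Qed.

Lemma sumR_lift (F : 'I_n.+1 -> R) : \sum_k F k = F a + \sum_(l < n) F (lift a l).
Proof. by rewrite (bigD1_ord a). Qed.
Lemma sum_const_n (c : R) : \sum_(l < n) c = nR * c.
Proof. by rewrite sumr_const card_ord mulr_natl. Qed.

Definition thc : 'rV[R]_n.+1 := \row_k (if k == a then 0 else nR^-1).
Lemma thc_sum : \sum_k thc 0 k = 1.
Proof.
rewrite sumR_lift !mxE eqxx add0r.
rewrite (eq_bigr (fun _ => nR^-1)) => [|l _]; last by rewrite mxE lift_eqF.
by rewrite sum_const_n mulfV // nR_neq0.
Qed.

Lemma beta_neg : beta 0 a < 0.
Proof.
rewrite ltNge; apply/negP => hb.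
set S := \sum_k `|beta 0 k|.
have S0 : 0 <= S by apply: sumr_ge0 => k _.
have nS : 0 < 1 + nR * S by have := nR_gt0; nra.
set t := (1 + nR * S)^-1.
have t0 : 0 < t by rewrite invr_gt0.
have tS : t * (1 + nR * S) = 1 by rewrite mulVf // gt_eqF.
set th := (1 - t) *: thc + t *: beta.
have ths : \sum_k th 0 k = 1.
  rewrite /th; have -> : \sum_k ((1 - t) *: thc + t *: beta) 0 k =
     \sum_k ((1 - t) * thc 0 k + t * beta 0 k) by apply: eq_bigr => k _; rewrite !mxE.
  by rewrite big_split /= -!mulr_sumr thc_sum beta_sum; ring.
set p := th *m V2.
have lp : lam p = th by rewrite lam_comb.
have sp2 : simplex V2 p.
  apply/sig2P => k; rewrite lp !mxE; case: (eqVneq k a) => [->|hk].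
    by rewrite mulr0 add0r mulr_ge0 // ltW.
  have bk : `|beta 0 k| <= S by rewrite /S (bigD1 k) //= lerDl sumr_ge0.
  have : - `|beta 0 k| <= beta 0 k by rewrite lerNnormlW.
  have e1 : (1 - t) * nR^-1 = t * S.
    apply: (mulIf nR_neq0); rewrite mulfVK ?nR_neq0 //; lra.
  rewrite e1; nra.
have sp1 : simplex V1 p.
  apply/sig1P; exists t, ((1 - t) *: thc); rewrite lp; split => //.
  - by rewrite ltW.
  - by rewrite !mxE eqxx mulr0.
  - move=> k; rewrite !mxE; case: eqP => _; rewrite ?mulr0 //.
    apply: mulr_ge0; last by rewrite invr_ge0 ltW // nR_gt0.
    have : t <= 1 by have h := mulr_ge0 (ltW nR_gt0) S0; nra.
    lra.
  - by rewrite sum_scale thc_sum mulr1.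
have /(htau p) := (proj1 (hcap p) (conj sp1 sp2)).
rewrite /facet_vertices => /facetP [w [w1 w2 w3 w4]].
have : simplex (facet_vertices V2 a) (thc *m V2).
  by apply/tauP; rewrite lam_comb ?thc_sum // !mxE eqxx; split => // k; rewrite mxE; case: eqP => _ //; rewrite invr_ge0 ltW // nR_gt0.
move/htau; rewrite /facet_vertices => /facetP [wc [c1 c2 c3 c4]].
have := @uV1 w ((1 - t) *: wc + t *: (@delta R _ i1)).
have -> : \sum_i ((1 - t) *: wc + t *: (@delta R _ i1)) 0 i =
   \sum_i ((1 - t) * wc 0 i + t * (@delta R _ i1) 0 i) by apply: eq_bigr => k _; rewrite !mxE.
rewrite big_split /= -!mulr_sumr c3 delta_sum w3.
have -> : (1 - t) * 1 + t * 1 = 1 by ring.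
move=> /(_ erefl).
have hp : w *m V1 = ((1 - t) *: wc + t *: (@delta R _ i1)) *m V1.
  by rewrite -w4 /p /th !mulmxDl -!scalemxAl c4 delta_mul betaV.
move=> /(_ hp) /rowP /(_ i1); rewrite !mxE w1 c1 eqxx mulr0 add0r mulr1 => h.
by move: t0; rewrite -h ltxx.
Qed.

Definition mu (l : 'rV[R]_n.+1) := minJ (fun j => l 0 j).
Definition Dd (l : 'rV[R]_n.+1) := l 0 a + - (nR * mu l).
Definition Pp (l : 'rV[R]_n.+1) := - Num.min (- Dd l) 0.
Definition Qq (l : 'rV[R]_n.+1) := - Num.min (Dd l) 0.
Definition Rr (l : 'rV[R]_n.+1) := Num.min (l 0 a) (nR * mu l).
Definition phi (l : 'rV[R]_n.+1) (k : 'I_n.+1) :=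
  if k == a then Pp l + Qq l * beta 0 a
  else (l 0 k + (- mu l + 2 / nR * Rr l)) + Qq l * beta 0 k.
Definition Phi (l : 'rV[R]_n.+1) : 'rV[R]_n.+1 := \row_k phi l k.

Definition Ss (e : 'rV[R]_n.+1) := - Num.min (- (e 0 a * (beta 0 a)^-1)) 0.
Definition Hh (e : 'rV[R]_n.+1) := - Num.min (- e 0 a) 0.
Definition nu (e : 'rV[R]_n.+1) j := e 0 j + - (Ss e * beta 0 j).
Definition mp (e : 'rV[R]_n.+1) := minJ (nu e).
Definition gam (e : 'rV[R]_n.+1) (k : 'I_n.+1) :=
  if k == a then Hh e + nR * mp e * 2^-1
  else (nu e k + - (mp e * 2^-1)) + Ss e * nR^-1.
Definition Gam (e : 'rV[R]_n.+1) : 'rV[R]_n.+1 := \row_k gam e k.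

Lemma case1 l : 0 <= Dd l -> [/\ Pp l = Dd l, Qq l = 0 & Rr l = nR * mu l].
Proof.
rewrite /Pp /Qq /Rr /Dd => h.
case: (ltP (- (l 0 a + - (nR * mu l))) 0) => h1;
case: (ltP (l 0 a + - (nR * mu l)) 0) => h2;
case: (ltP (l 0 a) (nR * mu l)) => h3; split; lra.
Qed.
Lemma case2 l : Dd l < 0 -> [/\ Pp l = 0, Qq l = - Dd l & Rr l = l 0 a].
Proof.
rewrite /Pp /Qq /Rr /Dd => h.
case: (ltP (- (l 0 a + - (nR * mu l))) 0) => h1;
case: (ltP (l 0 a + - (nR * mu l)) 0) => h2;
case: (ltP (l 0 a) (nR * mu l)) => h3; split; lra.
Qed.

Lemma bneg : beta 0 a < 0. Proof. exact: beta_neg. Qed.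
Lemma bneq0 : beta 0 a != 0. Proof. by rewrite lt_eqF // bneg. Qed.

Lemma SsH_pos (e : 'rV[R]_n.+1) : 0 <= e 0 a -> Ss e = 0 /\ Hh e = e 0 a.
Proof.
move=> h; have hb := bneg.
have : e 0 a * (beta 0 a)^-1 <= 0 by rewrite mulr_ge0_le0 // ltW // invr_lt0.
rewrite /Ss /Hh => h2.
case: (ltP (- (e 0 a * (beta 0 a)^-1)) 0) => h1;
case: (ltP (- e 0 a) 0) => h3; split; lra.
Qed.
Lemma SsH_neg (e : 'rV[R]_n.+1) : e 0 a < 0 ->
  [/\ Ss e * beta 0 a = e 0 a, 0 < Ss e & Hh e = 0].
Proof.
move=> h; have hb := bneg.
have h2 : 0 < e 0 a * (beta 0 a)^-1 by rewrite nmulr_rgt0 // invr_lt0.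
have hS : Ss e = e 0 a * (beta 0 a)^-1.
  rewrite /Ss; case: (ltP (- (e 0 a * (beta 0 a)^-1)) 0) => h1; lra.
split.
- by rewrite hS mulfVK // bneq0.
- by rewrite hS.
- rewrite /Hh; case: (ltP (- e 0 a) 0) => h3; lra.
Qed.

Lemma phi_a l : phi l a = Pp l + Qq l * beta 0 a.
Proof. by rewrite /phi eqxx. Qed.
Lemma phi_j l j : j != a -> phi l j = (l 0 j + (- mu l + 2 / nR * Rr l)) + Qq l * beta 0 j.
Proof. by rewrite /phi => /negbTE ->. Qed.
Lemma gam_a e : gam e a = Hh e + nR * mp e * 2^-1.
Proof. by rewrite /gam eqxx. Qed.
Lemma gam_j e j : j != a -> gam e j = (nu e j + - (mp e * 2^-1)) + Ss e * nR^-1.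
Proof. by rewrite /gam => /negbTE ->. Qed.

Lemma GamPhi l : Gam (Phi l) = l.
Proof.
have nz := nR_neq0.
apply/rowP => k; rewrite mxE.
set e := Phi l.
have ea : e 0 a = Pp l + Qq l * beta 0 a by rewrite mxE phi_a.
have ej : forall j, j != a -> e 0 j = (l 0 j + (- mu l + 2 / nR * Rr l)) + Qq l * beta 0 j.
  by move=> j hj; rewrite mxE phi_j.
case: (leP 0 (Dd l)) => hD.
  have [P1 Q1 R1] := case1 hD.
  rewrite P1 Q1 mul0r addr0 in ea; rewrite Q1 R1 in ej.
  have [S1 H1] : Ss e = 0 /\ Hh e = e 0 a by apply: SsH_pos; rewrite ea.
  have nuE : forall j, j != a -> nu e j = l 0 j + mu l.
    by move=> j hj; rewrite /nu S1 mul0r oppr0 addr0 ej // mul0r addr0; field; rewrite ?nz.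
  have mE : mp e = mu l + mu l by rewrite /mp (minJ_ext nuE) minJ_shift.
  case: (eqVneq k a) => [->|hk].
    by rewrite gam_a H1 mE ea /Dd; field; rewrite ?nz.
  by rewrite gam_j // nuE // mE S1 mul0r addr0; field; rewrite ?nz.
have [P1 Q1 R1] := case2 hD.
rewrite P1 Q1 add0r in ea; rewrite Q1 R1 in ej.
have hea : e 0 a < 0 by rewrite ea; have := bneg; nra.
have [S1 S2 H1] := SsH_neg hea.
have sE : Ss e = - Dd l.
  by apply: (mulIf bneq0); rewrite S1 ea.
have nuE : forall j, j != a -> nu e j = l 0 j + (- mu l + 2 / nR * l 0 a).
  by move=> j hj; rewrite /nu sE ej //; ring.
have mE : mp e = 2 / nR * l 0 a.
  rewrite /mp (minJ_ext nuE) minJ_shift -/(mu l); ring.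
case: (eqVneq k a) => [->|hk].
  by rewrite gam_a H1 mE; field; rewrite ?nz.
by rewrite gam_j // nuE // mE sE /Dd; field; rewrite ?nz.
Qed.

Lemma PhiGam e : Phi (Gam e) = e.
Proof.
have nz := nR_neq0.
apply/rowP => k; rewrite mxE.
set l := Gam e.
have la : l 0 a = Hh e + nR * mp e * 2^-1 by rewrite mxE gam_a.
have lj : forall j, j != a -> l 0 j = (nu e j + - (mp e * 2^-1)) + Ss e * nR^-1.
  by move=> j hj; rewrite mxE gam_j.
have muE : mu l = mp e + (- (mp e * 2^-1) + Ss e * nR^-1).
  rewrite /mu (minJ_ext (g := fun j => nu e j + (- (mp e * 2^-1) + Ss e * nR^-1))).
    by rewrite minJ_shift.
  by move=> j hj; rewrite lj // addrA.
case: (leP 0 (e 0 a)) => hE.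
  have [S1 H1] := SsH_pos hE.
  have hD : Dd l = e 0 a.
    by rewrite /Dd la muE H1 S1; fld.
  have h0 : 0 <= Dd l by rewrite hD.
  have [P1 Q1 R1] := case1 h0.
  case: (eqVneq k a) => [->|hk].
    by rewrite phi_a P1 Q1 hD mul0r addr0.
  rewrite phi_j // Q1 R1 mul0r addr0 lj // muE /nu S1; fld.
have [S1 S2 H1] := SsH_neg hE.
have hD : Dd l = - Ss e.
  by rewrite /Dd la muE H1; fld.
have h0 : Dd l < 0 by rewrite hD oppr_lt0.
have [P1 Q1 R1] := case2 h0.
case: (eqVneq k a) => [->|hk].
  by rewrite phi_a P1 Q1 hD opprK add0r.
rewrite phi_j // Q1 R1 hD opprK lj // muE la H1 /nu; fld.
Qed.

Lemma Phi_sum l : \sum_k Phi l 0 k = \sum_k l 0 k.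
Proof.
have nz := nR_neq0.
rewrite sumR_lift [in RHS]sumR_lift mxE phi_a.
rewrite (eq_bigr (fun i => l 0 (lift a i) + (- mu l + 2 / nR * Rr l) + Qq l * beta 0 (lift a i))); last first.
  by move=> i _; rewrite mxE phi_j // eq_sym neq_lift.
rewrite !big_split /= !sum_const_n -mulr_sumr.
have hb : \sum_(i < n) beta 0 (lift a i) = 1 - beta 0 a.
  by have := beta_sum; rewrite sumR_lift => <-; ring.
rewrite hb.
case: (leP 0 (Dd l)) => hD.
  have [P1 Q1 R1] := case1 hD; rewrite P1 Q1 R1 /Dd; fld.
have [P1 Q1 R1] := case2 hD; rewrite P1 Q1 R1 /Dd; fld.
Qed.

Lemma Gam_sum e : \sum_k Gam e 0 k = \sum_k e 0 k.
Proof. by rewrite -Phi_sum PhiGam. Qed.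

Lemma coord_envE m (x : 'rV[R]_m) j (h : (j < m)%N) : coord_env x j = x 0 (Ordinal h).
Proof.
rewrite /coord_env; case: ltnP => h'; first by congr (x 0 _); apply: val_inj.
by exfalso; move: h; rewrite ltnNge h'.
Qed.
Lemma cev m (x : 'rV[R]_m) (j : 'I_m) : coord_env x (val j) = x 0 j.
Proof. by rewrite (coord_envE x (ltn_ord j)); congr (x 0 _); apply: val_inj. Qed.
Lemma coord_env_out m (x : 'rV[R]_m) j : (m <= j)%N -> coord_env x j = 0.
Proof. by rewrite /coord_env; case: ltnP => // h h'; exfalso; move: h; rewrite ltnNge h'. Qed.

Definition vT (j : 'I_n.+1) : mexpr R := @MV R (val j).
Definition muT := foldr (@MMin R) (vT j0) [seq vT j | j <- Jlist].
Lemma muT_ok l : meval (coord_env l) muT = mu l.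
Proof.
rewrite /muT meval_foldr_min /mu /minJ; congr foldr; first exact: cev.
by apply: eq_map => j; exact: cev.
Qed.
Definition DdT := MAdd (vT a) (MOpp (MMul (MC nR) muT)).
Definition PpT := MOpp (MMin (MOpp DdT) (MC 0)).
Definition QqT := MOpp (MMin DdT (MC 0)).
Definition RrT := MMin (vT a) (MMul (MC nR) muT).
Definition PhiF (k : 'I_n.+1) :=
  if k == a then MAdd PpT (MMul QqT (MC (beta 0 a)))
  else MAdd (MAdd (vT k) (MAdd (MOpp muT) (MMul (MC (2 / nR)) RrT))) (MMul QqT (MC (beta 0 k))).
Lemma PhiF_ok l k : meval (coord_env l) (PhiF k) = Phi l 0 k.
Proof.
rewrite mxE /PhiF /phi /Pp /Qq /Rr /Dd /PpT /QqT /RrT /DdT.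
by case: eqP => _ /=; rewrite !muT_ok !cev.
Qed.

Definition SsT := MOpp (MMin (MOpp (MMul (vT a) (MC (beta 0 a)^-1))) (MC 0)).
Definition HhT := MOpp (MMin (MOpp (vT a)) (MC 0)).
Definition nuT j := MAdd (vT j) (MOpp (MMul SsT (MC (beta 0 j)))).
Definition mpT := foldr (@MMin R) (nuT j0) [seq nuT j | j <- Jlist].
Definition GamF (k : 'I_n.+1) :=
  if k == a then MAdd HhT (MMul (MMul (MC nR) mpT) (MC 2^-1))
  else MAdd (MAdd (nuT k) (MOpp (MMul mpT (MC 2^-1)))) (MMul SsT (MC nR^-1)).
Lemma nuT_ok e j : meval (coord_env e) (nuT j) = nu e j.
Proof. by rewrite /nuT /nu /Ss /SsT /= !cev. Qed.
Lemma mpT_ok e : meval (coord_env e) mpT = mp e.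
Proof.
rewrite /mpT meval_foldr_min /mp /minJ; congr foldr; first exact: nuT_ok.
by apply: eq_map => j; exact: nuT_ok.
Qed.
Lemma GamF_ok e k : meval (coord_env e) (GamF k) = Gam e 0 k.
Proof.
rewrite mxE /GamF /gam /Hh /HhT.
by case: eqP => _ /=; rewrite ?mpT_ok ?nuT_ok /Ss /SsT /= !cev.
Qed.

Definition LinT (k : 'I_n.+1) : mexpr R :=
  MAdd (msum [seq MMul (@MV R (val i)) (MC (Pm (lshift 1 i) k)) | i <- enum 'I_n])
       (MC (Pm (rshift n ord0) k)).
Lemma LinT_ok x k : meval (coord_env x) (LinT k) = lam x 0 k.
Proof.
rewrite /LinT /= meval_msum /lam [in RHS]mxE big_split_ord /= big_ord1 row_mxEr.
have e1 : (1 : 'rV[R]_1) 0 ord0 = 1 by rewrite mxE.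
congr (_ + _); last by rewrite e1 mul1r.
by apply: eq_bigr => i _ /=; rewrite cev row_mxEl.
Qed.
Definition LamT (j : nat) : mexpr R :=
  if (j < n.+1)%N then LinT (inord j) else MC 0.
Lemma LamT_ok x j : meval (coord_env x) (LamT j) = coord_env (lam x) j.
Proof.
rewrite /LamT; case: ltnP => h; last by rewrite coord_env_out.
by rewrite LinT_ok -[in RHS](inordK h) cev.
Qed.

Definition mapF (F : 'I_n.+1 -> mexpr R) (x : 'rV[R]_n) : 'rV[R]_n :=
  (\row_k meval (coord_env (lam x)) (F k)) *m V2.
Definition psiT (F : 'I_n.+1 -> mexpr R) (i : 'I_n) : mexpr R :=
  msum [seq MMul (msubst LamT (F k)) (MC (V2 k i)) | k <- enum 'I_n.+1].
Lemma mapF_row F x : mapF F x = \row_i meval (coord_env x) (psiT F i).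
Proof.
apply/rowP => i; rewrite /mapF !mxE /psiT meval_msum; apply: eq_bigr => k _ /=.
rewrite mxE meval_subst; congr (_ * _); apply: meval_ext => j.
by rewrite LamT_ok.
Qed.

Lemma cont_ext m (A : 'rV[R]_n -> Prop) (f g : 'rV[R]_n -> 'rV[R]_m) :
  (forall x, f x = g x) -> continuous_on A f -> continuous_on A g.
Proof.
move=> e h x hx eps heps; have [d hd H] := h x hx eps heps.
by exists d => // y hy; rewrite -!e; apply: H.
Qed.
Lemma mapF_cont F (A : 'rV[R]_n -> Prop) : continuous_on A (mapF F).
Proof.
apply: (@cont_ext _ A (fun x => \row_i meval (coord_env x) (psiT F i))).
  by move=> x; rewrite mapF_row.
exact: cont_rows.
Qed.

Lemma LinT_lsub (z : 'rV[R]_(n + n)) k :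
  meval (coord_env z) (LinT k) = meval (coord_env (lsubmx z)) (LinT k).
Proof.
rewrite /LinT /= !meval_msum; congr (_ + _); apply: eq_bigr => i _ /=.
rewrite (cev (lsubmx z) i) (coord_envE z (ltn_addr n (ltn_ord i))) mxE.
by congr (z 0 _ * _); apply: val_inj.
Qed.
Lemma LamT_lsub (z : 'rV[R]_(n + n)) j :
  meval (coord_env z) (LamT j) = meval (coord_env (lsubmx z)) (LamT j).
Proof. by rewrite /LamT; case: ifP => _ //; apply: LinT_lsub. Qed.
Lemma psiT_lsub F (z : 'rV[R]_(n + n)) i :
  meval (coord_env z) (psiT F i) = meval (coord_env (lsubmx z)) (psiT F i).
Proof.
rewrite /psiT !meval_msum; apply: eq_bigr => k _ /=; rewrite !meval_subst.
by congr (_ * _); apply: meval_ext => j; exact: LamT_lsub.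
Qed.

Definition DlT F (i : 'I_n) := MAdd (@MV R (n + val i)) (MOpp (psiT F i)).
Definition BigT F :=
  MAdd (msum [seq MMul (MMin (LamT (val k)) (MC 0)) (MMin (LamT (val k)) (MC 0)) | k <- enum 'I_n.+1])
       (msum [seq MMul (DlT F i) (DlT F i) | i <- enum 'I_n]).

Lemma sq_sum_eq0 m (f : 'I_m -> R) : \sum_i f i * f i = 0 <-> forall i, f i = 0.
Proof.
split; last by move=> h; apply: big1 => i _; rewrite h mulr0.
move=> h i.
have hF : forall j, xpredT j -> 0 <= f j * f j by move=> j _; rewrite -expr2 sqr_ge0.
have := psumr_eq0P hF h (i := i) erefl.
by move/eqP; rewrite mulf_eq0 orbb => /eqP.
Qed.

Lemma min0_eq0 (u : R) : Num.min u 0 = 0 <-> 0 <= u.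
Proof. by case: (ltP u 0) => h; split => // h'; lra. Qed.

Lemma BigT_ok F (z : 'rV[R]_(n + n)) : meval (coord_env z) (BigT F) = 0 <->
  (simplex V2 (lsubmx z) /\ rsubmx z = mapF F (lsubmx z)).
Proof.
have e1 : forall k : 'I_n.+1, meval (coord_env z) (LamT (val k)) = lam (lsubmx z) 0 k.
  by move=> k; rewrite LamT_lsub LamT_ok cev.
have e2 : forall i, meval (coord_env z) (DlT F i) = rsubmx z 0 i - mapF F (lsubmx z) 0 i.
  move=> i; rewrite /DlT /= psiT_lsub mapF_row mxE.
  have hi : (n + i < n + n)%N by rewrite ltn_add2l.
  by rewrite (coord_envE z hi) mxE; congr (z 0 _ - _); apply: val_inj.
rewrite /BigT /= !meval_msum.
rewrite (eq_bigr (fun k => Num.min (lam (lsubmx z) 0 k) 0 * Num.min (lam (lsubmx z) 0 k) 0)); last first.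
  by move=> k _ /=; rewrite e1.
rewrite (eq_bigr (fun i => (rsubmx z 0 i - mapF F (lsubmx z) 0 i) * (rsubmx z 0 i - mapF F (lsubmx z) 0 i))); last first.
  by move=> i _; rewrite -e2.
rewrite sig2P.
have g1 : 0 <= \sum_k Num.min (lam (lsubmx z) 0 k) 0 * Num.min (lam (lsubmx z) 0 k) 0.
  by apply: sumr_ge0 => k _; rewrite -expr2 sqr_ge0.
have g2 : 0 <= \sum_i (rsubmx z 0 i - mapF F (lsubmx z) 0 i) * (rsubmx z 0 i - mapF F (lsubmx z) 0 i).
  by apply: sumr_ge0 => k _; rewrite -expr2 sqr_ge0.
split.
  move=> /eqP; rewrite paddr_eq0 // => /andP[/eqP h1 /eqP h2].
  move/sq_sum_eq0: h1 => h1; move/sq_sum_eq0: h2 => h2; split.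
    by move=> k; apply/min0_eq0.
  by apply/rowP => i; apply/eqP; rewrite -subr_eq0 h2.
case=> h1 h2.
have -> : \sum_k Num.min (lam (lsubmx z) 0 k) 0 * Num.min (lam (lsubmx z) 0 k) 0 = 0.
  by apply/sq_sum_eq0 => k; apply/min0_eq0.
have -> : \sum_i (rsubmx z 0 i - mapF F (lsubmx z) 0 i) * (rsubmx z 0 i - mapF F (lsubmx z) 0 i) = 0.
  by apply/sq_sum_eq0 => i; rewrite h2 subrr.
by rewrite addr0.
Qed.

Lemma sa_ext m (S T : 'rV[R]_m -> Prop) : (forall z, S z <-> T z) -> semialgebraic S -> semialgebraic T.
Proof. by move=> h [L HL]; exists L => z; rewrite -h. Qed.

Lemma mapF_sa F : semialgebraic_map (simplex V2) (mapF F).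
Proof.
apply: (sa_ext _ (sa_zero (n + n) (BigT F))) => z.
exact: BigT_ok.
Qed.

Definition psi := mapF PhiF.
Definition gg := mapF GamF.

Lemma psiE x : psi x = Phi (lam x) *m V2.
Proof. by rewrite /psi /mapF; congr (_ *m _); apply/rowP => k; rewrite [LHS]mxE PhiF_ok. Qed.
Lemma ggE y : gg y = Gam (lam y) *m V2.
Proof. by rewrite /gg /mapF; congr (_ *m _); apply/rowP => k; rewrite [LHS]mxE GamF_ok. Qed.
Lemma lam_psi x : lam (psi x) = Phi (lam x).
Proof. by rewrite psiE lam_comb // Phi_sum lam_sum. Qed.
Lemma lam_gg y : lam (gg y) = Gam (lam y).
Proof. by rewrite ggE lam_comb // Gam_sum lam_sum. Qed.
Lemma gg_psi x : gg (psi x) = x.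
Proof. by rewrite ggE lam_psi GamPhi lamV. Qed.
Lemma psi_gg y : psi (gg y) = y.
Proof. by rewrite psiE lam_gg PhiGam lamV. Qed.

Lemma Ss_ge0 e : 0 <= Ss e.
Proof. rewrite /Ss; case: (ltP (- (e 0 a * (beta 0 a)^-1)) 0) => h; lra. Qed.
Lemma Hh_ge0 e : 0 <= Hh e.
Proof. rewrite /Hh; case: (ltP (- e 0 a) 0) => h; lra. Qed.

Lemma Gam_ge0 e : (forall j, j != a -> 0 <= nu e j) -> forall k, 0 <= Gam e 0 k.
Proof.
move=> h k; have m0 : 0 <= mp e by apply: minJ_ge0.
have := Ss_ge0 e; have := Hh_ge0 e; have := nR_gt0 => h1 h2 h3.
rewrite mxE; case: (eqVneq k a) => [->|hk].
  rewrite gam_a; have : 0 <= nR * mp e * 2^-1 by rewrite mulr_ge0 ?invr_ge0 // mulr_ge0 // ltW.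
  lra.
rewrite gam_j //; have := minJ_le (nu e) hk.
have : 0 <= Ss e * nR^-1 by rewrite mulr_ge0 // invr_ge0 ltW.
rewrite -/(mp e); lra.
Qed.

Lemma In1_nu e : In1 e -> forall j, j != a -> 0 <= nu e j.
Proof.
case=> s [nv [s1 n1 n2 n3 ->]] j hj; have hb := bneg.
have ea : (nv + s *: beta) 0 a = s * beta 0 a by rewrite !mxE n1 add0r.
case: (leP 0 ((nv + s *: beta) 0 a)) => h.
  have [S1 _] := SsH_pos h.
  have s0 : s = 0 by move: h; rewrite ea; nra.
  by rewrite /nu S1 mul0r oppr0 addr0 !mxE s0 mul0r addr0.
have [S1 _ _] := SsH_neg h.
have sE : Ss (nv + s *: beta) = s by apply: (mulIf bneq0); rewrite S1 ea.
by rewrite /nu sE !mxE addrK.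
Qed.

Lemma In2_nu (e : 'rV[R]_n.+1) : (forall k, 0 <= e 0 k) -> forall j, j != a -> 0 <= nu e j.
Proof.
move=> h j hj; have [S1 _] := SsH_pos (h a).
by rewrite /nu S1 mul0r oppr0 addr0.
Qed.

Lemma gg_in y : simplex V1 y \/ simplex V2 y -> simplex V2 (gg y).
Proof.
move=> H; apply/sig2P; rewrite lam_gg; apply: Gam_ge0.
case: H => [/sig1P|/sig2P]; [exact: In1_nu | exact: In2_nu].
Qed.

Lemma psi_in x : simplex V2 x -> simplex V1 (psi x) \/ simplex V2 (psi x).
Proof.
have nz := nR_neq0.
move=> /sig2P hl; set l := lam x in hl *.
have m0 : 0 <= mu l by apply: minJ_ge0.
case: (leP 0 (Dd l)) => hD.
  right; apply/sig2P; rewrite lam_psi -/l => k.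
  have [P1 Q1 R1] := case1 hD; rewrite mxE.
  case: (eqVneq k a) => [->|hk]; first by rewrite phi_a P1 Q1 mul0r addr0.
  rewrite phi_j // Q1 R1 mul0r addr0.
  have -> : l 0 k + (- mu l + 2 / nR * (nR * mu l)) = l 0 k + mu l by fld.
  by apply: addr_ge0.
left; apply/sig1P; rewrite lam_psi -/l.
have [P1 Q1 R1] := case2 hD.
exists (Qq l), (Phi l - Qq l *: beta); split.
- by rewrite Q1; lra.
- by rewrite !mxE phi_a P1 add0r subrr.
- move=> k; rewrite !mxE; case: (eqVneq k a) => [->|hk].
    by rewrite phi_a P1 add0r subrr.
  rewrite phi_j // R1 addrK.
  have := minJ_le (fun j => l 0 j) hk; rewrite -/(mu l) => h1.
  have : 0 <= 2 / nR * l 0 a by rewrite mulr_ge0 // mulr_ge0 // invr_ge0 ltW // nR_gt0.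
  lra.
- have := sum_comb (Phi l - Qq l *: beta) (Qq l).
  rewrite subrK Phi_sum /l lam_sum => h; lra.
- by rewrite subrK.
Qed.

Lemma Phi1 l : 0 <= Dd l -> Phi l 0 a = Dd l /\ forall j, j != a -> Phi l 0 j = l 0 j + mu l.
Proof.
move=> hD; have nz := nR_neq0; have [P1 Q1 R1] := case1 hD; split.
  by rewrite mxE phi_a P1 Q1 mul0r addr0.
by move=> j hj; rewrite mxE phi_j // Q1 R1 mul0r addr0; fld.
Qed.

Lemma Gam_a_pos e : 0 <= mp e -> (0 < Hh e \/ 0 < mp e) -> 0 < Gam e 0 a.
Proof.
move=> m0 h; rewrite mxE gam_a; have := Hh_ge0 e; have := nR_gt0 => h1 h2.
have h2i : (0:R) < 2^-1 by rewrite invr_gt0.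
case: h => h.
  have : 0 <= nR * mp e * 2^-1 by rewrite mulr_ge0 ?mulr_ge0 // ltW.
  lra.
have : 0 < nR * mp e * 2^-1 by rewrite mulr_gt0 ?mulr_gt0.
lra.
Qed.

Lemma D_iff y :
  (simplex_relint V1 y \/ (simplex V2 y /\ ~ simplex_bd (facet_vertices V2 a) y)) <->
  exists2 x, (simplex V2 x /\ ~ simplex (facet_vertices V2 a) x) & psi x = y.
Proof.
have nz := nR_neq0; have hb := bneg.
split.
  move=> H; exists (gg y); last exact: psi_gg; split.
    apply: gg_in; case: H => [/relint_simplex|[]]; [by left | by right].
  move/tauP => [ha _]; move: ha; rewrite lam_gg; apply/eqP; rewrite gt_eqF //.
  case: H => [/rel1P [s [nv [s1 n1 n2 n3 e]]]|[/sig2P h2 hnd]].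
    have ea : lam y 0 a = s * beta 0 a by rewrite e !mxE n1 add0r.
    have hea : lam y 0 a < 0 by rewrite ea pmulr_rlt0.
    have [S1 _ H1] := SsH_neg hea.
    have sE : Ss (lam y) = s by apply: (mulIf bneq0); rewrite S1 ea.
    have nuE : forall j, j != a -> nu (lam y) j = nv 0 j.
      by move=> j hj; rewrite /nu sE e !mxE addrK.
    have mp0 : 0 < mp (lam y).
      by apply: minJ_gt0 => j hj; rewrite nuE // n2.
    by apply: Gam_a_pos; [apply: ltW | right].
  have [S1 H1] := SsH_pos (h2 a).
  have nuE : forall j, j != a -> nu (lam y) j = lam y 0 j.
    by move=> j hj; rewrite /nu S1 mul0r oppr0 addr0.
  have mp0 : 0 <= mp (lam y) by apply: minJ_ge0 => j hj; rewrite nuE.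
  apply: Gam_a_pos => //; rewrite H1.
  case: (ltrgtP 0 (lam y 0 a)) => ha; [by left | by have := h2 a; lra | right].
  rewrite ltNge; apply/negP => hm; apply: hnd; split.
    by apply/tauP; split.
  move/tau0P => [_ hpos].
  have [j hj ej] := minJ_ex (nu (lam y)).
  by have := hpos j hj; rewrite -nuE // -ej -/(mp (lam y)); lra.
case=> x [/sig2P hl hnt] <-.
set l := lam x in hl *.
have la : 0 < l 0 a.
  rewrite lt_def hl andbT; apply/eqP => h0; apply: hnt; apply/tauP; split => //.
have m0 : 0 <= mu l by apply: minJ_ge0.
case: (leP 0 (Dd l)) => hD.
  have [Pa Pj] := Phi1 hD.
  right; split.
    apply/sig2P; rewrite lam_psi -/l => k.
    case: (eqVneq k a) => [->|hk]; first by rewrite Pa.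
    by rewrite Pj // addr_ge0.
  move=> [/tauP [ha _] hn]; apply: hn; apply/tau0P; rewrite lam_psi -/l in ha *.
  split => // j hj; rewrite Pj //.
  have mpos : 0 < mu l.
    move: ha; rewrite Pa /Dd => ha.
    have : nR * mu l = l 0 a by lra.
    have := nR_gt0; nra.
  by have := hl j; lra.
left; apply/rel1P; rewrite lam_psi -/l.
have [P1 Q1 R1] := case2 hD.
exists (Qq l), (Phi l - Qq l *: beta); split.
- by rewrite Q1; lra.
- by rewrite !mxE phi_a P1 add0r subrr.
- move=> k hk; rewrite !mxE.
  rewrite phi_j // R1 addrK.
  have := minJ_le (fun j => l 0 j) hk; rewrite -/(mu l) => h1.
  have : 0 < 2 / nR * l 0 a by rewrite mulr_gt0 // mulr_gt0 // invr_gt0 nR_gt0.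
  lra.
- have := sum_comb (Phi l - Qq l *: beta) (Qq l).
  rewrite subrK Phi_sum /l lam_sum => h; lra.
- by rewrite subrK.
Qed.

Lemma psi_id x : simplex_bd V2 x -> ~ simplex_relint (facet_vertices V2 a) x -> psi x = x.
Proof.
have nz := nR_neq0.
move=> [/sig2P hl hnr] hnt0; set l := lam x in hl.
have m0 : 0 <= mu l by apply: minJ_ge0.
have mz : mu l = 0.
  apply/le_anti; rewrite m0 andbT leNgt; apply/negP => hm.
  have pos : forall j, j != a -> 0 < l 0 j.
    by move=> j hj; apply: lt_le_trans hm (minJ_le _ hj).
  case: (ltrgtP 0 (l 0 a)) => ha.
  - by apply: hnr; apply/rel2P => k; case: (eqVneq k a) => [->|hk]; [| apply: pos].
  - by have := hl a; lra.
  - by apply: hnt0; apply/tau0P; split.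
have hD : 0 <= Dd l by rewrite /Dd mz mulr0 oppr0 addr0.
have [Pa Pj] := Phi1 hD.
rewrite psiE -/l.
have -> : Phi l = l.
  apply/rowP => k; case: (eqVneq k a) => [->|hk].
    by rewrite Pa /Dd mz mulr0 oppr0 addr0.
  by rewrite Pj // mz addr0.
exact: lamV.
Qed.

Lemma main_sec :
  let sigma1 := simplex V1 in
  let sigma2 := simplex V2 in
  let tau := simplex (facet_vertices V2 i2) in
  let tau0 := simplex_relint (facet_vertices V2 i2) in
  let dtau := simplex_bd (facet_vertices V2 i2) in
  let D := fun x => simplex_relint V1 x \/ (sigma2 x /\ ~ dtau x) in
  let Dbar := fun x => sigma1 x \/ sigma2 x in
  exists psi : 'rV[R]_n -> 'rV[R]_n,
    [/\ semialgebraic_map sigma2 psi,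
        homeomorphism_on sigma2 Dbar psi,
        (forall y, D y <-> exists2 x, (sigma2 x /\ ~ tau x) & psi x = y) &
        (forall x, simplex_bd V2 x -> ~ tau0 x -> psi x = x)].
Proof.
move=> sigma1 sigma2 tau tau0 dtau D Dbar.
exists psi; split.
- exact: mapF_sa.
- split; first by move=> x hx; rewrite /Dbar /sigma1; case: (psi_in hx) => h; [left|right].
  split; first exact: mapF_cont.
  exists gg; split.
  + by move=> y hy; apply: gg_in.
  + exact: mapF_cont.
  + by move=> x _; apply: gg_psi.
  + by move=> y _; apply: psi_gg.
- exact: D_iff.
- exact: psi_id.
Qed.

End Main.

Theorem mainTheorem12 (R : rcfType) (n : nat) (n_gt0 : (0 < n)%N)
    (V1 V2 : 'M[R]_(n.+1, n))
    (hV1 : aff_indep V1) (hV2 : aff_indep V2)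
    (i1 i2 : 'I_n.+1)
    (htau_common : forall x, simplex (facet_vertices V1 i1) x <->
                             simplex (facet_vertices V2 i2) x)
    (hcap : forall x, (simplex V1 x /\ simplex V2 x) <->
                      simplex (facet_vertices V2 i2) x) :
  let sigma1 := simplex V1 in
  let sigma2 := simplex V2 in
  let tau := simplex (facet_vertices V2 i2) in
  let tau0 := simplex_relint (facet_vertices V2 i2) in
  let dtau := simplex_bd (facet_vertices V2 i2) in
  let D := fun x => simplex_relint V1 x \/ (sigma2 x /\ ~ dtau x) in
  let Dbar := fun x => sigma1 x \/ sigma2 x in
  exists psi : 'rV[R]_n -> 'rV[R]_n,
    [/\ semialgebraic_map sigma2 psi,
        homeomorphism_on sigma2 Dbar psi,
        (forall y, D y <-> exists2 x, (sigma2 x /\ ~ tau x) & psi x = y) &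
        (forall x, simplex_bd V2 x -> ~ tau0 x -> psi x = x)].
Proof. exact: (main_sec n_gt0 hV1 hV2 htau_common hcap). Qed.
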